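(* Let $n\ge2$ and $G=C_n\oplus C_n$. Let $(e_1,e_2)$ be a basis of $G$, let $x_1,x_2\in[0,n-1]$, and let $S=e_1^{[n-1]}\cdot e_2^{[n-1]}\cdot(x_1e_1+x_2e_2)^{[n-1]}$. Then $0\notin\Sigma_{\le n}(S)$ if and only if $(-x_1k)_n+(-x_2k)_n+(k)_n>n$ for every $k\in[1,n-1]$.
   Context: $C_n$ is a cyclic group of order $n$; $[a,b]$ denotes the integer interval; for integers $x$ and $n\ge1$, $(x)_n\in[0,n-1]$ denotes the least non-negative residue of $x$ modulo $n$. A basis of $G$ is an ordered pair $(e_1,e_2)$ with $G=\langle e_1\rangle\oplus\langle e_2\rangle$. A sequence over $G$ is a finite unordered list (multiset) of elements, $g^{[t]}$ denotes $g$ repeated $t$ times and $\cdot$ denotes concatenation. $\Sigma_{\le N}(S)$ is the set of sums of the terms of subsequences $T$ of $S$ with $1\le |T|\le N$. *)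

(* Defs.v *)
From mathcomp Require Import all_boot all_order all_algebra.
Set Implicit Arguments. Unset Strict Implicit. Unset Printing Implicit Defensive.
Import GRing.Theory Num.Theory.
Local Open Scope ring_scope.

(* The group C_n (+) C_n, modelled as 'Z_n * 'Z_n (only used with n >= 2). *)
Definition CnCn (n : nat) := ('Z_n * 'Z_n)%type.

(* (e1, e2) is a basis of G: G = <e1> (+) <e2>
   (internal direct sum: <e1> + <e2> = G and <e1> \cap <e2> = 0). *)
Definition is_basis (G : zmodType) (e1 e2 : G) : Prop :=
  (forall g : G, exists a b : nat, g = e1 *+ a + e2 *+ b) /\
  (forall a b : nat, e1 *+ a + e2 *+ b = 0 -> e1 *+ a = 0 /\ e2 *+ b = 0).

(* g \in Sigma_{<= N}(S): g is the sum of a subsequence T of S with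
   1 <= |T| <= N.  Sequences are lists; a subsequence is selected by a mask
   (orderings are irrelevant since sums are commutative). *)
Definition in_Sigma_le (G : zmodType) (N : nat) (S : seq G) (g : G) : Prop :=
  exists m : bitseq, size m = size S /\
    (0 < size (mask m S) <= N)%N /\ g = \sum_(x <- mask m S) x.

(* Main.v *)
Require Import Defs.
From mathcomp Require Import all_boot all_order all_algebra.
Import Order.TTheory GRing.Theory Num.Theory.
Set Implicit Arguments. Unset Strict Implicit.
Local Open Scope ring_scope.

Lemma pair_mulrn (A B : zmodType) (x : A * B) k : x *+ k = (x.1 *+ k, x.2 *+ k).
Proof.
elim: k => [|k IH]; first by [].
by rewrite !mulrS IH.
Qed.

Lemma Zn_n n (hn : (2 <= n)%N) (u : 'Z_n) : u *+ n = 0.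
Proof. by rewrite -mulr_natr pchar_Zp // mulr0. Qed.

Lemma mulrn_n n (hn : (2 <= n)%N) (x : CnCn n) : x *+ n = 0.
Proof. by rewrite pair_mulrn !Zn_n. Qed.

Lemma mulrn_mod n (hn : (2 <= n)%N) (x : CnCn n) a : x *+ a = x *+ (a %% n).
Proof.
by rewrite {1}(divn_eq a n) mulrnDr mulrnA mulrn_n // add0r.
Qed.

Lemma mulrn_dvd n (hn : (2 <= n)%N) (x : CnCn n) a : (n %| a)%N -> x *+ a = 0.
Proof. by move=> /eqP h; rewrite mulrn_mod // h. Qed.

Lemma basis_inj n (hn : (2 <= n)%N) (e1 e2 : CnCn n) (hb : is_basis e1 e2) :
  injective (fun p : 'I_n * 'I_n => e1 *+ p.1 + e2 *+ p.2).
Proof.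
pose f : 'I_n * 'I_n -> ('Z_n * 'Z_n)%type := fun p => e1 *+ p.1 + e2 *+ p.2.
change (injective f).
have n0 : (0 < n)%N by apply: leq_trans hn.
have sur : forall g, g \in codom f.
  move=> g; case: hb => /(_ g) [a [b ->]] _.
  rewrite (mulrn_mod hn e1 a) (mulrn_mod hn e2 b).
  exact: (codom_f f (Ordinal (ltn_pmod a n0), Ordinal (ltn_pmod b n0))).
have cT : #|{: 'Z_n * 'Z_n}| = (n * n)%N.
  by rewrite card_prod card_ord Zp_cast.
have c1 : (#|{: 'Z_n * 'Z_n}| <= #|codom f|)%N.
  by apply: subset_leq_card; apply/subsetP => g _; exact: sur.
have h : #|codom f| == #|{: 'I_n * 'I_n}|.
  rewrite eqn_leq leq_image_card /=.
  by rewrite card_prod card_ord -cT.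

move/image_injP: h => h x y; exact: h.
Qed.

Lemma ord_e1 n (hn : (2 <= n)%N) (e1 e2 : CnCn n) (hb : is_basis e1 e2) a :
  e1 *+ a = 0 -> (n %| a)%N.
Proof.
have n0 : (0 < n)%N by apply: leq_trans hn.
move=> h; have := @basis_inj n hn e1 e2 hb (Ordinal (ltn_pmod a n0), Ordinal n0) (Ordinal n0, Ordinal n0).
rewrite /= !mulr0n -mulrn_mod // h => /(_ (erefl _)) [].
by rewrite /dvdn => ->.
Qed.

Lemma ord_e2 n (hn : (2 <= n)%N) (e1 e2 : CnCn n) (hb : is_basis e1 e2) a :
  e2 *+ a = 0 -> (n %| a)%N.
Proof.
have n0 : (0 < n)%N by apply: leq_trans hn.
move=> h; have := @basis_inj n hn e1 e2 hb (Ordinal n0, Ordinal (ltn_pmod a n0)) (Ordinal n0, Ordinal n0).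
rewrite /= !mulr0n -mulrn_mod // h => /(_ (erefl _)) [].
by rewrite /dvdn => ->.
Qed.

Lemma mask_nseq_cnt (T : Type) (x : T) (m : bitseq) :
  mask m (nseq (size m) x) = nseq (count id m) x.
Proof. by elim: m => [|[] m IH] //=; rewrite IH. Qed.

Lemma sum_nseq (G : zmodType) (x : G) k : \sum_(y <- nseq k x) y = x *+ k.
Proof. by elim: k => [|k IH]; rewrite ?big_nil // big_cons IH mulrS. Qed.

Lemma int_mod_lemma (n a x c : nat) : (0 < n)%N -> (a < n)%N ->
  (n %| a + x * c)%N <-> (a%:Z = (- (x%:Z * c%:Z)) %% n%:Z)%Z.
Proof.
move=> n0 an.
have ha : (a%:Z %% n%:Z)%Z = a%:Z by rewrite modz_small // ltz_nat an andbT.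
rewrite -{1}ha; split.
  move=> hd; apply/eqP; rewrite eqz_mod_dvd opprK dvdzE.
  by rewrite -PoszM -PoszD.
move/eqP; rewrite eqz_mod_dvd opprK dvdzE.
by rewrite -PoszM -PoszD.
Qed.

Lemma mask_mk (T : Type) (x : T) j N : (j <= N)%N ->
  mask (nseq j true ++ nseq (N - j) false) (nseq N x) = nseq j x.
Proof.
move=> jN; have := mask_nseq_cnt x (nseq j true ++ nseq (N - j) false).
by rewrite size_cat !size_nseq subnKC // count_cat !count_nseq /= mul1n mul0n addn0.
Qed.

Lemma addr4 (G : zmodType) (p q r s : G) : p + (q + (r + s)) = (p + r) + (q + s).
Proof. by rewrite addrA addrACA. Qed.

Lemma sum_form n (e1 e2 : CnCn n) x1 x2 a b c :
  e1 *+ a + (e2 *+ b + (e1 *+ x1 + e2 *+ x2) *+ c) =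
  e1 *+ (a + x1 * c) + e2 *+ (b + x2 * c).
Proof. by rewrite mulrnDl -!mulrnA addr4 !mulrnDr. Qed.

Theorem lemma2p1 (n : nat) (hn : (2 <= n)%N) (e1 e2 : CnCn n)
  (hb : is_basis e1 e2) (x1 x2 : nat) (hx1 : (x1 <= n - 1)%N) (hx2 : (x2 <= n - 1)%N) :
  let S := nseq (n - 1) e1 ++ nseq (n - 1) e2 ++ nseq (n - 1) (e1 *+ x1 + e2 *+ x2) in
  ~ in_Sigma_le n S 0 <->
  (forall k : nat, (1 <= k <= n - 1)%N ->
     ((- (x1%:Z * k%:Z)) %% n%:Z)%Z + ((- (x2%:Z * k%:Z)) %% n%:Z)%Z + (k%:Z %% n%:Z)%Z
       > n%:Z).
Proof.
move=> S.
have n0 : (0 < n)%N by apply: leq_trans hn.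
have nz : n%:Z != 0 by rewrite eqz_nat -lt0n.
have kmod : forall k, (k <= n - 1)%N -> (k%:Z %% n%:Z)%Z = k%:Z.
  move=> k kn; rewrite modz_small // lez_nat leq0n ltz_nat /=.
  by apply: leq_ltn_trans kn _; rewrite subn1 ltn_predL.
split.
  move=> H k /andP[k1 kn]; rewrite ltNge; apply/negP => hle; apply: H.
  set A := ((- (x1%:Z * k%:Z)) %% n%:Z)%Z.
  set B := ((- (x2%:Z * k%:Z)) %% n%:Z)%Z.
  have aA : (`|A|%N)%:Z = A by rewrite abszE ger0_norm // modz_ge0.
  have bB : (`|B|%N)%:Z = B by rewrite abszE ger0_norm // modz_ge0.
  have an : (`|A| < n)%N by rewrite -ltz_nat aA ltz_pmod.
  have bn : (`|B| < n)%N by rewrite -ltz_nat bB ltz_pmod.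
  have ha := (int_mod_lemma x1 k n0 an).2 aA.
  have hb' := (int_mod_lemma x2 k n0 bn).2 bB.
  move: hle; rewrite -/A -/B kmod // -aA -bB -!PoszD lez_nat => hle.
  set a := `|A|%N in an ha hle; set b := `|B|%N in bn hb' hle.
  have an1 : (a <= n - 1)%N by rewrite leq_subRL // add1n.
  have bn1 : (b <= n - 1)%N by rewrite leq_subRL // add1n.
  exists ((nseq a true ++ nseq (n - 1 - a) false) ++ (nseq b true ++ nseq (n - 1 - b) false)
          ++ (nseq k true ++ nseq (n - 1 - k) false)).
  have sz : forall j, (j <= n - 1)%N -> size (nseq j true ++ nseq (n - 1 - j) false) = (n - 1)%N.
    by move=> j jn; rewrite size_cat !size_nseq subnKC.
  rewrite /S; split.
    by rewrite !size_cat !size_nseq !subnKC.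
  rewrite !mask_cat ?sz ?size_nseq // !mask_mk //.
  rewrite !size_cat !size_nseq.
  split; first by rewrite addnA hle andbT !addn_gt0 k1 !orbT.
  rewrite !big_cat /= !sum_nseq sum_form.
  by rewrite !mulrn_dvd // addr0.
move=> H [m [sz [/andP[pos le] sum0]]].
move: sz; rewrite /S !size_cat !size_nseq => sz.
set m1 := take (n - 1) m; set r := drop (n - 1) m.
set m2 := take (n - 1) r; set m3 := drop (n - 1) r.
have em : m = m1 ++ m2 ++ m3 by rewrite !cat_take_drop.
have sm1 : size m1 = (n - 1)%N by rewrite size_takel // sz leq_addr.
have sr : size r = ((n - 1) + (n - 1))%N by rewrite size_drop sz addKn.
have sm2 : size m2 = (n - 1)%N by rewrite size_takel // sr leq_addr.
have sm3 : size m3 = (n - 1)%N by rewrite size_drop sr addKn.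
have h1 : mask m1 (nseq (n - 1) e1) = nseq (count id m1) e1 by rewrite -sm1 mask_nseq_cnt.
have h2 : mask m2 (nseq (n - 1) e2) = nseq (count id m2) e2 by rewrite -sm2 mask_nseq_cnt.
have h3 : mask m3 (nseq (n - 1) (e1 *+ x1 + e2 *+ x2)) = nseq (count id m3) (e1 *+ x1 + e2 *+ x2)
  by rewrite -sm3 mask_nseq_cnt.
move: pos le sum0; rewrite em /S !mask_cat ?size_nseq ?sm1 ?sm2 ?sm3 //.
rewrite h1 h2 h3 !size_cat !size_nseq !big_cat /= !sum_nseq sum_form.
set a := count id m1; set b := count id m2; set c := count id m3.
have an : (a < n)%N by apply: leq_ltn_trans (count_size _ _) _; rewrite sm1 subn1 ltn_predL.
have bn : (b < n)%N by apply: leq_ltn_trans (count_size _ _) _; rewrite sm2 subn1 ltn_predL.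
have cn : (c <= n - 1)%N by rewrite -sm3 count_size.
move=> pos le /esym /(proj2 hb) [/(ord_e1 hn hb) d1 /(ord_e2 hn hb) d2].
case: (posnP c) => [c0 | c1].
  move: d1 d2 pos; rewrite c0 !muln0 !addn0 /dvdn !modn_small // => /eqP -> /eqP ->.
  by [].
have := H c; rewrite c1 cn => /(_ erefl).
rewrite -(int_mod_lemma _ _ n0 an).1 // -(int_mod_lemma _ _ n0 bn).1 // kmod //.
by rewrite -!PoszD ltz_nat ltnNge -addnA le.
Qed.
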